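(* Let $\mathsf{V}$ be a congruence distributive variety of $\mathcal{L}$-algebras that has the compact intersection property. For every finite set of variables $\overline{x}$ and conjunctions of equations $\varphi_1(\overline{x}),\varphi_2(\overline{x})$, there exists a conjunction of equations $\pi(\overline{x})$ such that for every finite set of variables $\overline{y}$ and every equation $\varepsilon(\overline{x},\overline{y})$, \[\mathsf{V}\models(\varphi_1\curlyvee\varphi_2)\to\varepsilon\iff\mathsf{V}\models\pi\to\varepsilon.\]
   Context: $\mathcal{L}$ is an algebraic first-order language with at least one constant symbol; $\curlyvee$ denotes disjunction. $\mathsf{V}\models\alpha$ means all members of $\mathsf{V}$ satisfy $\alpha$ under all assignments. $\mathsf{V}$ has the compact intersection property if for every $\mathbf{A}\in\mathsf{V}$, the intersection of any two compact (finitely generated) congruences of $\mathbf{A}$ is compact. *)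

(* Defs.v *)
From Stdlib Require Import List.
From Stdlib Require Fin.
Import ListNotations.

Record language := {
  op : Type;
  arity : op -> nat
}.

Definition has_constant (L : language) : Prop :=
  exists c : op L, arity L c = 0.

Record algebra (L : language) := {
  carrier :> Type;
  interp : forall f : op L, (Fin.t (arity L f) -> carrier) -> carrier
}.
Arguments interp {L} _ f args.

Inductive term (L : language) (X : Type) : Type :=
| var : X -> term L X
| app : forall f : op L, (Fin.t (arity L f) -> term L X) -> term L X.
Arguments var {L X} x.
Arguments app {L X} f args.

Fixpoint eval {L : language} {X : Type} (A : algebra L) (s : X -> A)
  (t : term L X) : A :=
  match t with
  | var x => s x
  | app f args => interp A f (fun i => eval A s (args i))
  end.

Definition equation (L : language) (X : Type) : Type := (term L X * term L X)%type.
Definition conj_eqs (L : language) (X : Type) : Type := list (equation L X).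

Definition sat_eq {L : language} {X : Type} (A : algebra L) (s : X -> A)
  (e : equation L X) : Prop := eval A s (fst e) = eval A s (snd e).

Definition sat_conj {L : language} {X : Type} (A : algebra L) (s : X -> A)
  (phi : conj_eqs L X) : Prop := forall e, In e phi -> sat_eq A s e.

Definition is_hom {L : language} (A B : algebra L) (h : A -> B) : Prop :=
  forall (f : op L) (args : Fin.t (arity L f) -> A),
    h (interp A f args) = interp B f (fun i => h (args i)).

Definition prod_alg {L : language} (I : Type) (F : I -> algebra L) : algebra L :=
  {| carrier := forall i : I, F i;
     interp := fun f args => fun i => interp (F i) f (fun j => args j i) |}.

Definition is_variety {L : language} (V : algebra L -> Prop) : Prop :=
  (forall (A B : algebra L) (h : A -> B),
      V A -> is_hom A B h -> (forall b : B, exists a : A, h a = b) -> V B) /\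
  (* closed under subalgebras (up to isomorphism: injective homomorphisms) *)
  (forall (A B : algebra L) (h : B -> A),
      V A -> is_hom B A h -> (forall x y : B, h x = h y -> x = y) -> V B) /\
  (forall (I : Type) (F : I -> algebra L),
      (forall i, V (F i)) -> V (prod_alg I F)).

Definition rel (A : Type) : Type := A -> A -> Prop.

Definition is_congruence {L : language} (A : algebra L) (theta : rel A) : Prop :=
  (forall a, theta a a) /\
  (forall a b, theta a b -> theta b a) /\
  (forall a b c, theta a b -> theta b c -> theta a c) /\
  (forall (f : op L) (args1 args2 : Fin.t (arity L f) -> A),
      (forall i, theta (args1 i) (args2 i)) ->
      theta (interp A f args1) (interp A f args2)).

Definition rel_eq {A : Type} (r1 r2 : rel A) : Prop :=
  forall a b, r1 a b <-> r2 a b.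

Definition Cg {L : language} (A : algebra L) (R : rel A) : rel A :=
  fun a b => forall theta : rel A,
    is_congruence A theta -> (forall x y, R x y -> theta x y) -> theta a b.

Definition cmeet {A : Type} (r1 r2 : rel A) : rel A := fun a b => r1 a b /\ r2 a b.

Definition cjoin {L : language} (A : algebra L) (r1 r2 : rel A) : rel A :=
  Cg A (fun a b => r1 a b \/ r2 a b).

Definition congruence_distributive_alg {L : language} (A : algebra L) : Prop :=
  forall theta phi psi : rel A,
    is_congruence A theta -> is_congruence A phi -> is_congruence A psi ->
    rel_eq (cmeet theta (cjoin A phi psi))
           (cjoin A (cmeet theta phi) (cmeet theta psi)).

Definition congruence_distributive {L : language} (V : algebra L -> Prop) : Prop :=
  forall A, V A -> congruence_distributive_alg A.

Definition compact_congruence {L : language} (A : algebra L) (theta : rel A) : Prop :=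
  exists l : list (A * A),
    rel_eq theta (Cg A (fun a b => In (a, b) l)).

Definition compact_intersection_property {L : language} (V : algebra L -> Prop) : Prop :=
  forall A, V A -> forall theta psi : rel A,
    compact_congruence A theta -> compact_congruence A psi ->
    compact_congruence A (cmeet theta psi).

(* V |= (phi1 \/ phi2) -> eps, where phi1, phi2 are in the variables xbar
   (Fin.t n) and eps is in the variables xbar, ybar (Fin.t n + Fin.t m). *)
Definition models_disj_imp {L : language} (V : algebra L -> Prop) {n m : nat}
  (phi1 phi2 : conj_eqs L (Fin.t n)) (eps : equation L (Fin.t n + Fin.t m)) : Prop :=
  forall A, V A -> forall s : (Fin.t n + Fin.t m) -> A,
    (sat_conj A (fun x => s (inl x)) phi1 \/ sat_conj A (fun x => s (inl x)) phi2) ->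
    sat_eq A s eps.

Definition models_imp {L : language} (V : algebra L -> Prop) {n m : nat}
  (pi : conj_eqs L (Fin.t n)) (eps : equation L (Fin.t n + Fin.t m)) : Prop :=
  forall A, V A -> forall s : (Fin.t n + Fin.t m) -> A,
    sat_conj A (fun x => s (inl x)) pi -> sat_eq A s eps.

(* Main.v *)
From Stdlib Require Import List Arith Lia.
Require Import Defs.
From Stdlib Require Import Classical ClassicalEpsilon FunctionalExtensionality PropExtensionality ProofIrrelevance.
From Stdlib Require Fin.
Import ListNotations.

Lemma my_choice {A B : Type} (R : A -> B -> Prop) :
  (forall x, exists y, R x y) -> exists f, forall x, R x (f x).
Proof.
  intro H. exists (fun x => proj1_sig (constructive_indefinite_description _ (H x))).
  intro x. exact (proj2_sig (constructive_indefinite_description _ (H x))).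
Qed.

Lemma sig_eq {A} {P : A -> Prop} (x y : {a | P a}) : proj1_sig x = proj1_sig y -> x = y.
Proof. destruct x, y; simpl; intros ->. f_equal. apply proof_irrelevance. Qed.

Fixpoint subst {L : language} {X Y} (s : X -> term L Y) (t : term L X) : term L Y :=
  match t with var x => s x | app f args => app f (fun i => subst s (args i)) end.

Lemma eval_subst {L : language} {X Y} (A : algebra L) (a : Y -> A) (s : X -> term L Y) t :
  eval A a (subst s t) = eval A (fun x => eval A a (s x)) t.
Proof.
  induction t as [x| f args IH]; simpl; [reflexivity|]. f_equal.
  apply functional_extensionality. intro i. apply IH.
Qed.

Lemma eval_ext {L : language} {X} (A : algebra L) (a b : X -> A) t :
  (forall x, a x = b x) -> eval A a t = eval A b t.
Proof. intro H. replace a with b; [reflexivity|]. symmetry; apply functional_extensionality; auto. Qed.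

Lemma eval_hom {L : language} {X} (A B : algebra L) (h : A -> B) (a : X -> A) t :
  is_hom A B h -> h (eval A a t) = eval B (fun x => h (a x)) t.
Proof.
  intro Hh. induction t as [x| f args IH]; simpl; [reflexivity|].
  rewrite Hh. f_equal. apply functional_extensionality. intro i. apply IH.
Qed.

Lemma Cg_congr {L : language} (A : algebra L) R : is_congruence A (Cg A R).
Proof.
  split; [|split; [|split]].
  - intros a th Hth HR. apply (proj1 Hth).
  - intros a b H th Hth HR. apply (proj1 (proj2 Hth)). apply H; auto.
  - intros a b c H1 H2 th Hth HR. apply (proj1 (proj2 (proj2 Hth))) with b; [apply H1|apply H2]; auto.
  - intros f a1 a2 H th Hth HR. apply (proj2 (proj2 (proj2 Hth))). intro i. apply H; auto.
Qed.

Lemma Cg_incl {L : language} (A : algebra L) (R : rel A) a b : R a b -> Cg A R a b.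
Proof. intros H th _ HR; auto. Qed.

Lemma Cg_ext {L : language} (A : algebra L) (R R' : rel A) :
  (forall a b, R a b <-> R' a b) -> rel_eq (Cg A R) (Cg A R').
Proof.
  intros He a b; split; intros H th Ht HR; apply H; auto; intros x y Hxy; apply HR; apply He; auto.
Qed.

Section Quot.
Context {L : language} (B : algebra L) (th : rel B) (Hth : is_congruence B th).
Definition qcar := {P : B -> Prop | exists b, P = th b}.
Definition qrep (P : qcar) : B := proj1_sig (constructive_indefinite_description _ (proj2_sig P)).
Lemma qrep_spec P : proj1_sig P = th (qrep P).
Proof. exact (proj2_sig (constructive_indefinite_description _ (proj2_sig P))). Qed.
Definition qproj (b : B) : qcar := exist _ (th b) (ex_intro _ b eq_refl).
Definition qalg : algebra L :=
  {| carrier := qcar; interp := fun f args => qproj (interp B f (fun j => qrep (args j))) |}.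
Lemma qproj_eq a b : qproj a = qproj b <-> th a b.
Proof.
  destruct Hth as (Hr & Hs & Ht & Hc).
  split.
  - intro H. apply (f_equal (@proj1_sig _ _)) in H. simpl in H.
    assert (th b a) by (rewrite <- H; apply Hr). auto.
  - intro H. apply sig_eq. simpl. apply functional_extensionality. intro c.
    apply propositional_extensionality. split; intro H'; eauto.
Qed.
Lemma qproj_rep P : qproj (qrep P) = P.
Proof. apply sig_eq. simpl. rewrite <- qrep_spec. reflexivity. Qed.
Lemma qproj_hom : is_hom B qalg qproj.
Proof.
  intros f args. simpl. apply qproj_eq. apply (proj2 (proj2 (proj2 Hth))). intro j.
  pose proof (qproj_rep (qproj (args j))) as H. apply qproj_eq in H.
  apply (proj1 (proj2 Hth)). exact H.
Qed.
End Quot.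

Lemma quotient_in_V {L : language} (V : algebra L -> Prop) (HV : is_variety V) (B : algebra L) th :
  V B -> is_congruence B th ->
  exists (Q : algebra L) (q : B -> Q), V Q /\ is_hom B Q q /\ forall a b, q a = q b <-> th a b.
Proof.
  intros HB Hth. exists (qalg B th), (qproj B th). split; [|split].
  - apply (proj1 HV) with B (qproj B th); auto. apply qproj_hom; auto.
    intro b. exists (qrep B th b). apply qproj_rep.
  - apply qproj_hom; auto.
  - apply qproj_eq; auto.
Qed.

Section Sub.
Context {L : language} {X : Type} (B : algebra L) (g : X -> B).
Definition scar := {p : B | exists t, p = eval B g t}.
Lemma sub_closed f (args : Fin.t (arity L f) -> scar) :
  exists t, interp B f (fun j => proj1_sig (args j)) = eval B g t.
Proof.
  destruct (my_choice (fun j t => proj1_sig (args j) = eval B g t)) as [w Hw].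
  { intro j; exact (proj2_sig (args j)). }
  exists (app f w). simpl. f_equal. apply functional_extensionality. intro j. apply Hw.
Qed.
Definition salg : algebra L :=
  {| carrier := scar; interp := fun f args => exist _ _ (sub_closed f args) |}.
Definition sgen (x : X) : salg := exist _ (g x) (ex_intro _ (var x) eq_refl).
Lemma sgen_eval t : proj1_sig (eval salg sgen t) = eval B g t.
Proof.
  induction t as [x| f args IH]; simpl; [reflexivity|]. f_equal.
  apply functional_extensionality. intro j. apply IH.
Qed.
End Sub.

Lemma free_exists {L : language} (V : algebra L -> Prop) (HV : is_variety V) (X : Type) :
  exists (F : algebra L) (gF : X -> F), V F /\
    (forall s t, eval F gF s = eval F gF t -> forall A, V A -> forall a : X -> A, eval A a s = eval A a t) /\
    (forall p : F, exists t, p = eval F gF t).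
Proof.
  set (Vid := fun s t : term L X => forall A, V A -> forall a : X -> A, eval A a s = eval A a t).
  set (I := {st : (term L X * term L X)%type | ~ Vid (fst st) (snd st)}).
  assert (HW : forall i : I, exists W : {A : algebra L & X -> A}, V (projT1 W) /\
     eval (projT1 W) (projT2 W) (fst (proj1_sig i)) <> eval (projT1 W) (projT2 W) (snd (proj1_sig i))).
  { intros [[s t] Hst]. simpl. apply NNPP; intro Hno. apply Hst. intros A HA a.
    apply NNPP; intro Hne. apply Hno. exists (existT _ A a). simpl; auto. }
  destruct (my_choice _ HW) as [W HWs].
  set (Fam := fun i => projT1 (W i)).
  set (P := prod_alg I Fam).
  set (g := (fun x : X => (fun i => projT2 (W i) x) : P)).
  assert (HevP : forall t, eval P g t = fun i => eval (Fam i) (projT2 (W i)) t).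
  { induction t as [x|f args IH]; [reflexivity|].
    apply functional_extensionality_dep; intro i. cbn. f_equal.
    apply functional_extensionality; intro j. rewrite IH. reflexivity. }
  assert (HP : V P) by (apply (proj2 (proj2 HV)); intro i; apply (HWs i)).
  assert (Hfree : forall s t, eval P g s = eval P g t -> Vid s t).
  { intros s t Heq. apply NNPP; intro Hn. set (i := exist _ (s,t) Hn : I).
    destruct (HWs i) as [_ Hne]. apply Hne. simpl. rewrite !HevP in Heq.
    exact (f_equal (fun h => h i) Heq). }
  exists (salg P g), (sgen P g). split; [|split].
  - apply (proj1 (proj2 HV)) with P (@proj1_sig _ _); auto.
    + intros f args; reflexivity.
    + intros x y; apply sig_eq.
  - intros s t Heq. apply Hfree. rewrite <- (sgen_eval P g s), <- (sgen_eval P g t). rewrite Heq. reflexivity.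
  - intros [p [t Ht]]. exists t. apply sig_eq. rewrite (sgen_eval P g t). exact Ht.
Qed.

Definition relG {L : language} {X} (F : algebra L) (gF : X -> F) (G : conj_eqs L X) : rel F :=
  fun p q => exists e, In e G /\ p = eval F gF (fst e) /\ q = eval F gF (snd e).
Definition Vmod {L : language} {X} (V : algebra L -> Prop) (G : conj_eqs L X) (e : equation L X) :=
  forall A, V A -> forall a : X -> A, sat_conj A a G -> sat_eq A a e.

Lemma factA {L : language} {X} (V : algebra L -> Prop) (F : algebra L) (gF : X -> F)
  (Hfree : forall s t, eval F gF s = eval F gF t -> forall A, V A -> forall a : X -> A, eval A a s = eval A a t)
  (Hgen : forall p : F, exists t, p = eval F gF t) G e :
  Cg F (relG F gF G) (eval F gF (fst e)) (eval F gF (snd e)) -> Vmod V G e.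
Proof.
  intros HCg A HA a Hsat.
  set (K := fun p q : F => forall s t, p = eval F gF s -> q = eval F gF t -> eval A a s = eval A a t).
  assert (HK : is_congruence F K).
  { split; [|split; [|split]].
    - intros p s t Hs Ht. apply (Hfree s t); [congruence|auto].
    - intros p q Hpq s t Hs Ht. symmetry; apply Hpq; auto.
    - intros p q r Hpq Hqr s t Hs Ht. destruct (Hgen q) as [w Hw].
      transitivity (eval A a w); [apply Hpq | apply Hqr]; auto.
    - intros f args1 args2 Hargs s t Hs Ht.
      destruct (my_choice (fun j w => args1 j = eval F gF w)) as [w1 Hw1]; [intro j; apply Hgen|].
      destruct (my_choice (fun j w => args2 j = eval F gF w)) as [w2 Hw2]; [intro j; apply Hgen|].
      transitivity (eval A a (app f w1)).
      { apply (Hfree s (app f w1)); auto. rewrite <- Hs. simpl. f_equal.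
        apply functional_extensionality; intro j; apply Hw1. }
      transitivity (eval A a (app f w2)).
      2: { apply (Hfree (app f w2) t); auto. rewrite <- Ht. simpl. f_equal.
        apply functional_extensionality; intro j; symmetry; apply Hw2. }
      simpl. f_equal. apply functional_extensionality; intro j. apply (Hargs j); auto. }
  assert (HR : forall p q, relG F gF G p q -> K p q).
  { intros p q (e0 & He0 & Hp & Hq) s t Hs Ht.
    transitivity (eval A a (fst e0)). { apply Hfree; auto; congruence. }
    transitivity (eval A a (snd e0)). { apply Hsat; auto. }
    apply Hfree; auto; congruence. }
  exact (HCg K HK HR (fst e) (snd e) eq_refl eq_refl).
Qed.

Lemma factB {L : language} {X} (V : algebra L -> Prop) (HV : is_variety V) (F : algebra L) (gF : X -> F)
  (HF : V F) G e :
  Vmod V G e -> Cg F (relG F gF G) (eval F gF (fst e)) (eval F gF (snd e)).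
Proof.
  intros HVm.
  destruct (quotient_in_V V HV F (Cg F (relG F gF G)) HF (Cg_congr _ _)) as (Q & q & HQ & Hq & Hqeq).
  apply Hqeq. rewrite !(eval_hom F Q q gF) by auto.
  apply (HVm Q HQ (fun x => q (gF x))).
  intros e0 He0. unfold sat_eq. rewrite <- !eval_hom by auto. apply Hqeq.
  apply Cg_incl. exists e0; auto.
Qed.

Lemma relG_compact {L : language} {X} (F : algebra L) (gF : X -> F) G :
  compact_congruence F (Cg F (relG F gF G)).
Proof.
  exists (map (fun e => (eval F gF (fst e), eval F gF (snd e))) G).
  apply Cg_ext. intros a b. rewrite in_map_iff. split.
  - intros (e & He & -> & ->). exists e; auto.
  - intros (e & Heq & He). injection Heq; intros; subst. exists e; auto.
Qed.

Lemma list_terms {L : language} {X} (F : algebra L) (gF : X -> F)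
  (Hgen : forall p : F, exists t, p = eval F gF t) (l : list (F * F)) :
  exists G, forall a b, In (a,b) l <-> relG F gF G a b.
Proof.
  induction l as [|[p q] l IH].
  - exists []. intros a b; split; [intros []|intros (e & [] & _)].
  - destruct (Hgen p) as [s Hs]. destruct (Hgen q) as [t Ht]. destruct IH as [G HG].
    exists ((s,t)::G). intros a b. split.
    + intros [Heq|Hin].
      * injection Heq; intros; subst. exists (s,t); simpl; auto.
      * apply HG in Hin. destruct Hin as (e & He & H1 & H2). exists e; simpl; auto.
    + intros (e & [<-|He] & H1 & H2).
      * left. simpl in *. subst. reflexivity.
      * right. apply HG. exists e; auto.
Qed.

Fixpoint tb {L : language} {k} (N : nat) (t : term L (Fin.t k + nat)) : Prop :=
  match t with
  | var (inl _) => True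
  | var (inr j) => j < N
  | app f args => forall i, tb N (args i)
  end.

Lemma tb_mono {L : language} {k} (t : term L (Fin.t k + nat)) : forall N N', N <= N' -> tb N t -> tb N' t.
Proof.
  induction t as [z|f args IH]; [destruct z as [x|j]|]; simpl; intros; auto; [lia|]. eapply IH; eauto.
Qed.

Lemma fin_bound k (P : Fin.t k -> nat -> Prop) :
  (forall i N N', N <= N' -> P i N -> P i N') -> (forall i, exists N, P i N) -> exists N, forall i, P i N.
Proof.
  induction k as [|k IHk]; intros H1 H2.
  - exists 0. intro i. apply (Fin.case0 (fun i => P i 0) i).
  - destruct (H2 Fin.F1) as [N1 HN1].
    destruct (IHk (fun i => P (Fin.FS i)) (fun i => H1 (Fin.FS i)) (fun i => H2 (Fin.FS i))) as [N2 HN2].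
    exists (max N1 N2). intro i. apply (Fin.caseS' i).
    + apply H1 with N1; auto; lia.
    + intro p. apply H1 with N2; auto; lia.
Qed.

Lemma tb_exists {L : language} {k} (t : term L (Fin.t k + nat)) : exists N, tb N t.
Proof.
  induction t as [z|f args IH]; [destruct z as [x|j]|].
  - exists 0; simpl; auto.
  - exists (S j); simpl; lia.
  - destruct (fin_bound _ (fun i N => tb N (args i))) as [N HN]; auto.
    + intros i N N' HN; apply tb_mono; auto.
    + exists N; simpl; auto.
Qed.

Lemma list_bound {L : language} {k} (G : conj_eqs L (Fin.t k + nat)) :
  exists N, forall e, In e G -> tb N (fst e) /\ tb N (snd e).
Proof.
  induction G as [|e G IH].
  - exists 0; intros e [].
  - destruct IH as [N HN]. destruct (tb_exists (fst e)) as [N1 H1]. destruct (tb_exists (snd e)) as [N2 H2].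
    exists (max N (max N1 N2)). intros e' [<-|He].
    + split; [apply tb_mono with N1 | apply tb_mono with N2]; auto; lia.
    + destruct (HN e' He); split; apply tb_mono with N; auto; lia.
Qed.

Lemma tb_agree {L : language} {k} (A : algebra L) N (t : term L (Fin.t k + nat)) (a b : _ -> A) :
  tb N t -> (forall x, a (inl x) = b (inl x)) -> (forall j, j < N -> a (inr j) = b (inr j)) ->
  eval A a t = eval A b t.
Proof.
  intros Ht H1 H2. induction t as [z|f args IH]; [destruct z as [x|j]|]; simpl in *; auto.
  f_equal. apply functional_extensionality; intro i. apply IH; auto.
Qed.

Definition const_term {L : language} {Y} (c : op L) (Hc : arity L c = 0) : term L Y :=
  app c (fun i => False_rect _ (Fin.case0 (fun _ => False) (eq_rect _ Fin.t i _ Hc))).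

Lemma fin_of_nat_eq m (j : Fin.t m) p (H : p < m) : p = proj1_sig (Fin.to_nat j) -> Fin.of_nat_lt H = j.
Proof.
  intro Hp. subst p. rewrite (Fin.of_nat_ext H (proj2_sig (Fin.to_nat j))). apply Fin.of_nat_to_nat_inv.
Qed.

Theorem lemma4p1 (L : language) (HL : has_constant L) (V : algebra L -> Prop)
  (HV : is_variety V) (Hcd : congruence_distributive V)
  (Hcip : compact_intersection_property V)
  (n : nat) (phi1 phi2 : conj_eqs L (Fin.t n)) :
  exists pi : conj_eqs L (Fin.t n),
    forall (m : nat) (eps : equation L (Fin.t n + Fin.t m)),
      models_disj_imp V phi1 phi2 eps <-> models_imp V pi eps.
Proof.
  destruct HL as [c Hc].
  destruct (free_exists V HV (Fin.t n + nat)) as (F & gF & HF & Hfree & Hgen).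
  set (lift := fun (e : equation L (Fin.t n)) =>
         (subst (fun x => @var L (Fin.t n + nat) (inl x)) (fst e),
          subst (fun x => @var L (Fin.t n + nat) (inl x)) (snd e))).
  set (G1 := map lift phi1). set (G2 := map lift phi2).
  destruct (Hcip F HF _ _ (relG_compact F gF G1) (relG_compact F gF G2)) as [l0 Hl0].
  destruct (list_terms F gF Hgen l0) as [G0 HG0].
  destruct (list_bound G0) as [N HN].
  set (ct := @const_term L (Fin.t n) c Hc).
  set (kappa := fun x : Fin.t n + nat => match x with inl y => @var L (Fin.t n) y | inr _ => ct end).
  assert (Hkey : forall e, Cg F (relG F gF G0) (eval F gF (fst e)) (eval F gF (snd e)) <->
     cmeet (Cg F (relG F gF G1)) (Cg F (relG F gF G2)) (eval F gF (fst e)) (eval F gF (snd e))).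
  { intro e. pose proof (Cg_ext F _ _ HG0) as HE. split; intro H.
    - apply (proj2 (Hl0 _ _)). apply (proj2 (HE _ _)). exact H.
    - apply (proj1 (HE _ _)). apply (proj1 (Hl0 _ _)). exact H. }
  exists (map (fun e => (subst kappa (fst e), subst kappa (snd e))) G0).
  intros m eps.
  set (sh := fun z : Fin.t n + Fin.t m => match z with
        | inl x => @var L (Fin.t n + nat) (inl x)
        | inr j => @var L (Fin.t n + nat) (inr (N + proj1_sig (Fin.to_nat j))) end).
  set (eps' := (subst sh (fst eps), subst sh (snd eps))).
  split.
  - intro H.
    assert (HVi : forall phi, (forall A, V A -> forall s : Fin.t n + Fin.t m -> A,
                 sat_conj A (fun x => s (inl x)) phi -> sat_eq A s eps) -> Vmod V (map lift phi) eps').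
    { intros phi Hphi A HA a Hsat. unfold sat_eq; simpl. rewrite !eval_subst.
      apply (Hphi A HA (fun z => eval A a (sh z))).
      intros e He. specialize (Hsat (lift e) (in_map _ _ _ He)).
      unfold sat_eq in *; simpl in *. rewrite !eval_subst in Hsat. exact Hsat. }
    assert (H0 : Vmod V G0 eps').
    { apply (factA V F gF Hfree Hgen). apply (proj2 (Hkey eps')). split.
      - apply (factB V HV F gF HF). apply HVi. intros A HA s Hs. apply H; auto.
      - apply (factB V HV F gF HF). apply HVi. intros A HA s Hs. apply H; auto. }
    intros A HA s Hpi.
    set (cv := eval A (fun x => s (inl x)) ct).
    set (a := fun z : Fin.t n + nat => match z with
          | inl x => s (inl x)
          | inr k => if lt_dec k N then cv else
                     match lt_dec (k - N) m with left Hk => s (inr (Fin.of_nat_lt Hk)) | right _ => cv end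
          end).
    assert (Ha : forall j : Fin.t m, a (inr (N + proj1_sig (Fin.to_nat j))) = s (inr j)).
    { intro j. simpl. destruct (lt_dec (N + proj1_sig (Fin.to_nat j)) N); [lia|].
      destruct (lt_dec (N + proj1_sig (Fin.to_nat j) - N) m) as [Hk|Hk].
      - f_equal. f_equal. apply fin_of_nat_eq. lia.
      - exfalso; apply Hk. destruct (Fin.to_nat j); simpl; lia. }
    assert (Hsat : sat_conj A a G0).
    { intros e He. destruct (HN e He) as [Hb1 Hb2].
      specialize (Hpi _ (in_map (fun e => (subst kappa (fst e), subst kappa (snd e))) _ _ He)).
      unfold sat_eq in *; simpl in Hpi. rewrite !eval_subst in Hpi.
      assert (Hag : forall t, tb N t -> eval A a t = eval A (fun x => eval A (fun x => s (inl x)) (kappa x)) t).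
      { intros t Ht. apply tb_agree with N; auto.
        intros j Hj. simpl. destruct (lt_dec j N); [reflexivity|lia]. }
      rewrite !Hag by auto. exact Hpi. }
    specialize (H0 A HA a Hsat). unfold sat_eq in *; simpl in H0. rewrite !eval_subst in H0.
    rewrite (eval_ext A s (fun z => eval A a (sh z)) (fst eps)).
    rewrite (eval_ext A s (fun z => eval A a (sh z)) (snd eps)). exact H0.
    all: intros [x|j]; simpl; [reflexivity| symmetry; apply Ha].
  - intro H. intros A HA s Hor. apply H; auto.
    intros e He. apply in_map_iff in He. destruct He as (e0 & <- & He0).
    assert (Hc0 : Cg F (relG F gF G0) (eval F gF (fst e0)) (eval F gF (snd e0))).
    { apply Cg_incl. exists e0; auto. }
    apply (proj1 (Hkey e0)) in Hc0. destruct Hc0 as [C1 C2].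
    assert (Hgen' : forall phi, Cg F (relG F gF (map lift phi)) (eval F gF (fst e0)) (eval F gF (snd e0)) ->
         sat_conj A (fun x => s (inl x)) phi ->
         sat_eq A (fun x => s (inl x)) (subst kappa (fst e0), subst kappa (snd e0))).
    { intros phi Hc1 Hs1.
      pose proof (factA V F gF Hfree Hgen _ e0 Hc1 A HA (fun x => eval A (fun x => s (inl x)) (kappa x))) as HH.
      unfold sat_eq in *; simpl. rewrite !eval_subst. apply HH.
      intros e' He'. apply in_map_iff in He'. destruct He' as (e1 & <- & He1).
      unfold sat_eq; simpl. rewrite !eval_subst. apply Hs1; auto. }
    destruct Hor as [H1|H1]; [apply (Hgen' phi1) | apply (Hgen' phi2)]; auto.
Qed.
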